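(* Let $\mathcal{T}=\mathcal{X}=\mathcal{Y}=\{0,1\}$ and $P\in\Delta_{\mathcal{T},\mathcal{X},\mathcal{Y}}$ with $P(T=0)>0$, $P(T=1)>0$. Assume that if condition (c) or (d) holds then condition (a) or (b) holds, where: (a) $H_P(X\mid T)=0$; (b) $H_P(Y\mid T)=0$; (c) $H_P(X\mid T=0)=0$ and $H_P(Y\mid T=1)=0$; (d) $H_P(X\mid T=1)=0$ and $H_P(Y\mid T=0)=0$. If $\tilde Q\in\arg\max_{Q\in\Delta_P}H_Q(T\mid X,Y)$ lies in the relative interior of $\Delta_P$, then under $\tilde Q$, $T$ is conditionally independent of $X$ given $Y$, or $T$ is conditionally independent of $Y$ given $X$.
   Context: $\Delta_{\mathcal{T},\mathcal{X},\mathcal{Y}}$ is the set of all joint distributions of $(T,X,Y)$. For $P$, $\Delta_P=\{Q\in\Delta_{\mathcal{T},\mathcal{X},\mathcal{Y}}: Q(X=x,T=t)=P(X=x,T=t),\ Q(Y=y,T=t)=P(Y=y,T=t)\ \forall x,y,t\}$. $H_P(X\mid T=t)$ is the entropy of the conditional distribution of $X$ given $T=t$. Conditions (a)–(d) are exactly the cases in which $\Delta_P$ is a single point. *)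

(* Defs.v *)
From Stdlib Require Import Reals List.
Open Scope R_scope.

(* A joint distribution of (T,X,Y) on {0,1}^3 is a function T -> X -> Y -> R. *)
Definition jdist := bool -> bool -> bool -> R.

Definition sumb (f : bool -> R) : R := f false + f true.

Definition is_dist (Q : jdist) : Prop :=
  (forall t x y, 0 <= Q t x y) /\
  sumb (fun t => sumb (fun x => sumb (fun y => Q t x y))) = 1.

Definition pT  (Q : jdist) t := sumb (fun x => sumb (fun y => Q t x y)).
Definition pTX (Q : jdist) t x := sumb (fun y => Q t x y).
Definition pTY (Q : jdist) t y := sumb (fun x => Q t x y).
Definition pXY (Q : jdist) x y := sumb (fun t => Q t x y).
Definition pX  (Q : jdist) x := sumb (fun t => sumb (fun y => Q t x y)).
Definition pY  (Q : jdist) y := sumb (fun t => sumb (fun x => Q t x y)).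

Definition DeltaP (P Q : jdist) : Prop :=
  is_dist Q /\
  (forall t x, pTX Q t x = pTX P t x) /\
  (forall t y, pTY Q t y = pTY P t y).

(* p log p with the convention 0 log 0 = 0 (natural log; base irrelevant) *)
Definition plogp (p : R) : R := if Rlt_dec 0 p then p * ln p else 0.

Definition ent2 (f : bool -> R) : R := - sumb (fun b => plogp (f b)).

Definition H_X_given_Tt (P : jdist) t := ent2 (fun x => pTX P t x / pT P t).
Definition H_Y_given_Tt (P : jdist) t := ent2 (fun y => pTY P t y / pT P t).

Definition H_X_given_T (P : jdist) := sumb (fun t => pT P t * H_X_given_Tt P t).
Definition H_Y_given_T (P : jdist) := sumb (fun t => pT P t * H_Y_given_Tt P t).

Definition H_T_given_XY (Q : jdist) : R :=
  - sumb (fun t => sumb (fun x => sumb (fun y =>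
      if Rlt_dec 0 (Q t x y) then Q t x y * ln (Q t x y / pXY Q x y) else 0))).

Definition affcomb (l : list (R * jdist)) : jdist :=
  fun t x y => fold_right (fun cq acc => fst cq * snd cq t x y + acc) 0 l.

Definition aff_hull (S : jdist -> Prop) (Q : jdist) : Prop :=
  exists l : list (R * jdist),
    Forall (fun cq => S (snd cq)) l /\
    fold_right (fun cq acc => fst cq + acc) 0 l = 1 /\
    Q = affcomb l.

(* Relative interior (topology of R^8 via the max-norm) *)
Definition rel_interior (S : jdist -> Prop) (Q : jdist) : Prop :=
  S Q /\
  exists eps, 0 < eps /\
    forall Q', aff_hull S Q' ->
      (forall t x y, Rabs (Q' t x y - Q t x y) < eps) -> S Q'.

Definition is_argmax_HTXY (P Qt : jdist) : Prop :=
  DeltaP P Qt /\ forall Q, DeltaP P Q -> H_T_given_XY Q <= H_T_given_XY Qt.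

Definition CI_T_X_given_Y (Q : jdist) : Prop :=
  forall t x y, Q t x y * pY Q y = pTY Q t y * pXY Q x y.
Definition CI_T_Y_given_X (Q : jdist) : Prop :=
  forall t x y, Q t x y * pX Q x = pTX Q t x * pXY Q x y.

(* Main.v *)
Require Import Defs.
From Stdlib Require Import Reals List Lra Psatz FunctionalExtensionality.
From Coquelicot Require Import Coquelicot.
Open Scope R_scope.
Definition sg (b b' : bool) : R := if Bool.eqb b b' then 1 else -1.
Definition shift (Q : jdist) (t x y : bool) (s : R) : jdist :=
  fun t' x' y' => Q t' x' y' + (if Bool.eqb t' t then s * (sg x x' * sg y y') else 0).

Lemma shift_Delta P Q t x y s : DeltaP P Q ->
  (forall x' y', 0 <= Q t x' y' + s * (sg x x' * sg y y')) -> DeltaP P (shift Q t x y s).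
Proof.
  intros [[Hn Hs] [Hx Hy]] Hp.
  unfold DeltaP, is_dist, pTX, pTY, shift, sumb in *.
  split; [split|split].
  - intros t' x' y'. destruct (Bool.eqb t' t) eqn:E.
    + apply Bool.eqb_prop in E; subst t'. apply Hp.
    + specialize (Hn t' x' y'); lra.
  - rewrite <- Hs. destruct t, x, y; unfold sg; simpl; lra.
  - intros t' x'; rewrite <- Hx. destruct t, x, y, t', x'; unfold sg; simpl; lra.
  - intros t' y'; rewrite <- Hy. destruct t, x, y, t', y'; unfold sg; simpl; lra.
Qed.

Lemma zero_pattern P Q : DeltaP P Q -> rel_interior (DeltaP P) Q ->
  forall t x y, Q t x y = 0 -> Q t x (negb y) = 0 \/ Q t (negb x) y = 0.
Proof.
  intros HD [_ [eps [Heps Hrel]]] t x y H0.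
  assert (Hn : forall t x y, 0 <= Q t x y) by (destruct HD as [[Hn _] _]; exact Hn).
  destruct (Req_dec (Q t x (negb y)) 0) as [E1|E1]; [left; exact E1|].
  destruct (Req_dec (Q t (negb x) y) 0) as [E2|E2]; [right; exact E2|].
  exfalso.
  assert (P1 : 0 < Q t x (negb y)) by (specialize (Hn t x (negb y)); lra).
  assert (P2 : 0 < Q t (negb x) y) by (specialize (Hn t (negb x) y); lra).
  set (d := Rmin (Q t x (negb y)) (Q t (negb x) y)).
  assert (Hd : 0 < d) by (apply Rmin_pos; assumption).
  assert (Hd1 : d <= Q t x (negb y)) by apply Rmin_l.
  assert (Hd2 : d <= Q t (negb x) y) by apply Rmin_r.
  assert (HQ1 : DeltaP P (shift Q t x y d)).
  { apply shift_Delta; auto. intros x' y'.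
    pose proof (Hn t x' y').
    destruct x, y, x', y'; unfold sg; simpl in *; lra. }
  set (s := - Rmin eps d / 2).
  assert (Hm : 0 < Rmin eps d) by (apply Rmin_pos; lra).
  assert (Hm1 : Rmin eps d <= eps) by apply Rmin_l.
  assert (Rm1 : Rabs (-1) = 1) by (rewrite Rabs_left; lra).
  assert (Hsa : Rabs s < eps).
  { unfold s. rewrite Rabs_left; lra. }
  assert (Hs : DeltaP P (shift Q t x y s)).
  { apply Hrel.
    - exists ((1 - s/d, Q) :: (s/d, shift Q t x y d) :: nil). split; [|split].
      + constructor; [exact HD| constructor; [exact HQ1| constructor]].
      + simpl. field. lra.
      + apply functional_extensionality; intro t'.
        apply functional_extensionality; intro x'.
        apply functional_extensionality; intro y'.
        unfold affcomb, shift; simpl. destruct (Bool.eqb t' t); field; lra.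
    - intros t' x' y'. unfold shift.
      destruct (Bool.eqb t' t); [|replace (Q t' x' y' + 0 - Q t' x' y') with 0 by ring; rewrite Rabs_R0; lra].
      replace (Q t' x' y' + s * (sg x x' * sg y y') - Q t' x' y') with (s * (sg x x' * sg y y')) by ring.
      unfold sg; destruct (Bool.eqb x x'), (Bool.eqb y y');
      repeat rewrite Rabs_mult; rewrite ?Rabs_Ropp, ?Rabs_R1; rewrite ?Rm1, ?Rmult_1_r; lra. }
  destruct Hs as [[Hn' _] _]. specialize (Hn' t x y). unfold shift in Hn'.
  rewrite H0 in Hn'. destruct t, x, y; unfold sg in Hn'; simpl in Hn'; unfold s in Hn'; lra.
Qed.

Definition phi (q c : R) : R :=
  q * ln (q / (q + c)) + (if Rlt_dec 0 c then c * ln (c / (q + c)) else 0).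

Lemma phi_deriv a k c : 0 < a -> 0 <= c ->
  is_derive (fun s => phi (a + s * k) c) 0 (k * ln (a / (a + c))).
Proof.
  intros Ha Hc. unfold phi. destruct (Rlt_dec 0 c) as [Hc'|Hc'].
  - auto_derive; rewrite ?Rmult_0_l, ?Rplus_0_r.
    all: try lra.
    + repeat split; try (apply Rdiv_lt_0_compat; lra); try lra.
    + unfold Rdiv. field. lra.
  - assert (c = 0) by lra. subst c.
    auto_derive; rewrite ?Rmult_0_l, ?Rplus_0_r.
    all: try lra.
    + repeat split; try (apply Rdiv_lt_0_compat; lra); try lra.
    + unfold Rdiv. field. lra.
Qed.

Lemma if_pos q (A B : R) : 0 < q -> (if Rlt_dec 0 q then A else B) = A.
Proof. intros H; destruct (Rlt_dec 0 q); [reflexivity|contradiction]. Qed.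

Lemma stat Q : (forall x y, 0 < Q false x y) -> (forall x y, 0 <= Q true x y) ->
  (forall s, (forall x y, 0 <= Q false x y + s * (sg false x * sg false y)) ->
     H_T_given_XY (shift Q false false false s) <= H_T_given_XY Q) ->
  Q false false false * Q false true true * (pXY Q false true * pXY Q true false) =
  Q false false true * Q false true false * (pXY Q false false * pXY Q true true).
Proof.
  intros Hp Hc Hmax. set (d := 1). assert (Hd : 0 < d) by (unfold d; lra).
  set (m := Rmin (Rmin d (Rmin (Q false false false) (Q false false true)))
                 (Rmin (Q false true false) (Q false true true))).
  assert (Hm : 0 < m).
  { unfold m; repeat apply Rmin_pos; auto. }
  assert (Hm1 : m <= d /\ m <= Q false false false /\ m <= Q false false true /\
                m <= Q false true false /\ m <= Q false true true).
  { unfold m.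
    pose proof (Rmin_l (Rmin d (Rmin (Q false false false) (Q false false true)))
                 (Rmin (Q false true false) (Q false true true))).
    pose proof (Rmin_r (Rmin d (Rmin (Q false false false) (Q false false true)))
                 (Rmin (Q false true false) (Q false true true))).
    pose proof (Rmin_l d (Rmin (Q false false false) (Q false false true))).
    pose proof (Rmin_r d (Rmin (Q false false false) (Q false false true))).
    pose proof (Rmin_l (Q false false false) (Q false false true)).
    pose proof (Rmin_r (Q false false false) (Q false false true)).
    pose proof (Rmin_l (Q false true false) (Q false true true)).
    pose proof (Rmin_r (Q false true false) (Q false true true)).
    repeat split; lra. }
  set (G := fun s => -( (phi (Q false false false + s * (sg false false * sg false false)) (Q true false false)
                       + phi (Q false false true + s * (sg false false * sg false true)) (Q true false true))
                     + (phi (Q false true false + s * (sg false true * sg false false)) (Q true true false)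
                       + phi (Q false true true + s * (sg false true * sg false true)) (Q true true true)))).
  assert (HG : forall s, -m < s < m -> H_T_given_XY (shift Q false false false s) = G s).
  { intros s Hs. unfold G, H_T_given_XY, pXY, shift, sumb, phi. cbv [Bool.eqb].
    rewrite !Rplus_0_r.
    assert (Hk : forall x y, 0 < Q false x y + s * (sg false x * sg false y)).
    { intros x y; pose proof (Hp x y). destruct x, y; unfold sg; simpl; lra. }
    rewrite (if_pos (Q false false false + s * (sg false false * sg false false))) by apply Hk.
    rewrite (if_pos (Q false false true + s * (sg false false * sg false true))) by apply Hk.
    rewrite (if_pos (Q false true false + s * (sg false true * sg false false))) by apply Hk.
    rewrite (if_pos (Q false true true + s * (sg false true * sg false true))) by apply Hk.
    lra. }
  set (L := -((sg false false * sg false false * ln (Q false false false / (Q false false false + Q true false false))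
             + sg false false * sg false true * ln (Q false false true / (Q false false true + Q true false true)))
             + (sg false true * sg false false * ln (Q false true false / (Q false true false + Q true true false))
             + sg false true * sg false true * ln (Q false true true / (Q false true true + Q true true true))))).
  assert (HdG : is_derive G 0 L).
  { unfold G, L. apply (is_derive_opp (V := R_NormedModule)).
    apply (is_derive_plus (V := R_NormedModule)); apply (is_derive_plus (V := R_NormedModule)); apply phi_deriv; auto. }
  assert (HdH : is_derive (fun s => H_T_given_XY (shift Q false false false s)) 0 L).
  { apply is_derive_ext_loc with G; [|exact HdG].
    exists (mkposreal m Hm). intros s Hs.
    change (Rabs (s - 0) < m) in Hs. rewrite Rminus_0_r in Hs.
    apply Rabs_def2 in Hs. symmetry; apply HG; lra. }
  apply is_derive_Reals in HdH.
  assert (H0 : shift Q false false false 0 = Q).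
  { apply functional_extensionality; intro t'.
    apply functional_extensionality; intro x'.
    apply functional_extensionality; intro y'.
    unfold shift. destruct (Bool.eqb t' false); ring. }
  assert (HL : L = 0).
  { pose proof (deriv_maximum (fun s => H_T_given_XY (shift Q false false false s)) (-m) m 0
                  (exist _ L HdH)) as D.
    simpl in D. apply D; try lra. intros s H1 H2. rewrite H0. apply Hmax.
    intros x y; pose proof (Hp x y). destruct x, y; unfold sg; simpl; lra. }
  unfold L, sg in HL; simpl in HL.
  assert (Hq : forall x y, 0 < Q false x y + Q true x y).
  { intros x y; pose proof (Hp x y); pose proof (Hc x y); lra. }
  assert (Hr : forall x y, 0 < Q false x y / (Q false x y + Q true x y)).
  { intros x y; apply Rdiv_lt_0_compat; auto. }
  assert (E : ln (Q false false false / (Q false false false + Q true false false) *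
                  (Q false true true / (Q false true true + Q true true true))) =
              ln (Q false false true / (Q false false true + Q true false true) *
                  (Q false true false / (Q false true false + Q true true false)))).
  { rewrite !ln_mult by auto. lra. }
  apply ln_inv in E; [|apply Rmult_lt_0_compat; auto|apply Rmult_lt_0_compat; auto].
  unfold pXY, sumb.
  pose proof (Hq false false); pose proof (Hq false true); pose proof (Hq true false); pose proof (Hq true true).
  set (p00 := Q false false false + Q true false false) in *.
  set (p01 := Q false false true + Q true false true) in *.
  set (p10 := Q false true false + Q true true false) in *.
  set (p11 := Q false true true + Q true true true) in *.
  assert (Z : Q false false false * Q false true true * (p01 * p10) -
              Q false false true * Q false true false * (p00 * p11) =
              (Q false false false / p00 * (Q false true true / p11) -
               Q false false true / p01 * (Q false true false / p10)) * (p00 * p11 * p01 * p10)).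
  { field. repeat split; lra. }
  rewrite E in Z. lra.
Qed.

Lemma cancel_pos k u v : 0 < k -> k * u = k * v -> u = v.
Proof. intros Hk H. apply Rmult_eq_reg_l with k; lra. Qed.

Lemma pospos a b c d e f g h :
  0 < a -> 0 < b -> 0 < c -> 0 < d -> 0 < e -> 0 < f -> 0 < g -> 0 < h ->
  a*d*((b+f)*(c+g)) = b*c*((a+e)*(d+h)) ->
  e*h*((f+b)*(g+c)) = f*g*((e+a)*(h+d)) ->
  (a*f=b*e /\ c*h=d*g) \/ (a*g=c*e /\ b*h=d*f).
Proof.
  intros Ha Hb Hc Hd He Hf Hg Hh S0 S1.
  set (M := (b+f)*(c+g)). set (N := (a+e)*(d+h)).
  assert (HM : 0 < M) by (unfold M; apply Rmult_lt_0_compat; lra).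
  assert (S1' : e*h*M = f*g*N) by (unfold M, N; replace ((b+f)*(c+g)) with ((f+b)*(g+c)) by ring; replace ((a+e)*(d+h)) with ((e+a)*(h+d)) by ring; exact S1).
  assert (E2 : a*d*f*g - b*c*e*h = 0).
  { apply cancel_pos with M; [lra|].
    replace (M * (a*d*f*g - b*c*e*h)) with (f*g*(a*d*M) - b*c*(e*h*M)) by ring.
    fold M N in S0. rewrite S0, S1'. ring. }
  assert (E1 : a*b*(d*g-c*h) + c*d*(a*f-b*e) = 0).
  { replace (a*b*(d*g-c*h) + c*d*(a*f-b*e)) with
      ((a*d*((b+f)*(c+g)) - b*c*((a+e)*(d+h))) - (a*d*f*g - b*c*e*h)) by ring.
    rewrite S0, E2. ring. }
  assert (E3 : (b*c*e)*((d*g-c*h)*(b*h-d*f)) = 0).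
  { replace ((b*c*e)*((d*g-c*h)*(b*h-d*f))) with
      (d*f*g*(a*b*(d*g-c*h) + c*d*(a*f-b*e)) - (b*(d*g-c*h)+c*d*f)*(a*d*f*g - b*c*e*h)) by ring.
    rewrite E1, E2. ring. }
  assert (Hbce : 0 < b*c*e) by (repeat apply Rmult_lt_0_compat; lra).
  apply Rmult_integral in E3. destruct E3 as [E3|E3]; [lra|].
  apply Rmult_integral in E3. destruct E3 as [E3|E3].
  - left. split; [|lra].
    assert (c*d*(a*f-b*e) = 0) by (replace (d*g-c*h) with 0 in E1 by lra; lra).
    apply Rmult_integral in H. destruct H; [|lra].
    assert (0 < c*d) by (apply Rmult_lt_0_compat; lra). lra.
  - right. split; [|lra].
    apply cancel_pos with (b*d*f); [repeat apply Rmult_lt_0_compat; lra|].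
    replace (b*d*f*(a*g)) with (b*(a*d*f*g)) by ring.
    replace (b*d*f*(c*e)) with (c*e*(d*f)*b) by ring.
    replace (d*f) with (b*h) by lra. nra.
Qed.

Lemma zdiv k u : 0 < k -> k * u = 0 -> u = 0.
Proof. intros Hk H. apply Rmult_integral in H. destruct H; lra. Qed.

Lemma posdeg a b c d e f g h :
  0 < a -> 0 < b -> 0 < c -> 0 < d ->
  ((e=0/\f=0)\/(g=0/\h=0)) \/ ((e=0/\g=0)\/(f=0/\h=0)) ->
  a*d*((b+f)*(c+g)) = b*c*((a+e)*(d+h)) ->
  (a*f=b*e /\ c*h=d*g) \/ (a*g=c*e /\ b*h=d*f).
Proof.
  intros Ha Hb Hc Hd Hdeg S0.
  assert (Hab : 0 < a*b) by (apply Rmult_lt_0_compat; lra).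
  assert (Hcd : 0 < c*d) by (apply Rmult_lt_0_compat; lra).
  assert (Hac : 0 < a*c) by (apply Rmult_lt_0_compat; lra).
  assert (Hbd : 0 < b*d) by (apply Rmult_lt_0_compat; lra).
  destruct Hdeg as [[[-> ->]|[-> ->]]|[[-> ->]|[-> ->]]].
  - left. split; [ring|]. assert (d*g-c*h = 0); [|lra].
    apply zdiv with (a*b); [lra|]. nra.
  - left. split; [|ring]. assert (a*f-b*e = 0); [|lra].
    apply zdiv with (c*d); [lra|]. nra.
  - right. split; [ring|]. assert (b*h-d*f = 0); [|lra].
    apply zdiv with (a*c); [lra|]. nra.
  - right. split; [|ring]. assert (a*g-c*e = 0); [|lra].
    apply zdiv with (b*d); [lra|]. nra.
Qed.

Lemma alg a b c d e f g h :
  0 <= a -> 0 <= b -> 0 <= c -> 0 <= d -> 0 <= e -> 0 <= f -> 0 <= g -> 0 <= h ->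
  (0<a/\0<b/\0<c/\0<d) \/ ((a=0/\b=0)\/(c=0/\d=0)) \/ ((a=0/\c=0)\/(b=0/\d=0)) ->
  (0<e/\0<f/\0<g/\0<h) \/ ((e=0/\f=0)\/(g=0/\h=0)) \/ ((e=0/\g=0)\/(f=0/\h=0)) ->
  ((0<a/\0<b/\0<c/\0<d) -> a*d*((b+f)*(c+g)) = b*c*((a+e)*(d+h))) ->
  ((0<e/\0<f/\0<g/\0<h) -> e*h*((f+b)*(g+c)) = f*g*((e+a)*(h+d))) ->
  ( (((a=0/\b=0)\/(c=0/\d=0)) /\ ((e=0/\g=0)\/(f=0/\h=0))) \/
    (((e=0/\f=0)\/(g=0/\h=0)) /\ ((a=0/\c=0)\/(b=0/\d=0))) ->
    (((a=0/\b=0)\/(c=0/\d=0)) /\ ((e=0/\f=0)\/(g=0/\h=0))) \/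
    (((a=0/\c=0)\/(b=0/\d=0)) /\ ((e=0/\g=0)\/(f=0/\h=0))) ) ->
  (a*f=b*e /\ c*h=d*g) \/ (a*g=c*e /\ b*h=d*f).
Proof.
  intros Ha Hb Hc Hd He Hf Hg Hh K0 K1 S0 S1 Hyp.
  destruct K0 as [P0|D0].
  - destruct K1 as [P1|D1].
    + destruct P0 as (?&?&?&?); destruct P1 as (?&?&?&?).
      apply pospos; auto.
    + destruct P0 as (?&?&?&?). apply posdeg; auto.
  - destruct K1 as [P1|D1].
    + destruct P1 as (?&?&?&?).
      assert (Hs : (e*b=f*a /\ g*d=h*c) \/ (e*c=g*a /\ f*d=h*b)).
      { apply posdeg; auto. }
      destruct Hs as [[? ?]|[? ?]]; [left|right]; split; lra.
    + assert (Hz : (((a=0/\b=0)\/(c=0/\d=0)) /\ ((e=0/\f=0)\/(g=0/\h=0))) \/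
                   (((a=0/\c=0)\/(b=0/\d=0)) /\ ((e=0/\g=0)\/(f=0/\h=0)))).
      { destruct D0 as [R0|C0]; destruct D1 as [R1|C1]; auto. }
      clear Hyp S0 S1 D0 D1.
      destruct Hz as [[[[-> ->]|[-> ->]] [[-> ->]|[-> ->]]]|[[[-> ->]|[-> ->]] [[-> ->]|[-> ->]]]].
      all: first [left; split; ring | right; split; ring].
Qed.

Lemma plogp_0 : plogp 0 = 0.
Proof. unfold plogp. destruct (Rlt_dec 0 0); lra. Qed.
Lemma plogp_1 : plogp 1 = 0.
Proof. unfold plogp. destruct (Rlt_dec 0 1); [rewrite ln_1; ring|lra]. Qed.
Lemma plogp_neg v : 0 < v < 1 -> plogp v < 0.
Proof.
  intros Hv. unfold plogp. destruct (Rlt_dec 0 v); [|lra].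
  assert (ln v < 0) by (rewrite <- ln_1; apply ln_increasing; lra). nra.
Qed.
Lemma plogp_le v : 0 <= v <= 1 -> plogp v <= 0.
Proof.
  intros Hv. destruct (Req_dec v 0) as [->|]; [rewrite plogp_0; lra|].
  destruct (Req_dec v 1) as [->|]; [rewrite plogp_1; lra|].
  pose proof (plogp_neg v); lra.
Qed.

Lemma frac_le u v : 0 <= u -> 0 <= v -> 0 < u + v -> u / (u+v) <= 1.
Proof. intros. apply Rmult_le_reg_r with (u+v); [lra|]. unfold Rdiv.
  rewrite Rmult_assoc, Rinv_l by lra. lra. Qed.
Lemma frac_lt u v : 0 <= u -> 0 < v -> u / (u+v) < 1.
Proof. intros. apply Rmult_lt_reg_r with (u+v); [lra|]. unfold Rdiv.
  rewrite Rmult_assoc, Rinv_l by lra. lra. Qed.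

Lemma ent_facts u0 u1 : 0 <= u0 -> 0 <= u1 -> 0 < u0 + u1 ->
  0 <= -(plogp (u0/(u0+u1)) + plogp (u1/(u0+u1))) /\
  (-(plogp (u0/(u0+u1)) + plogp (u1/(u0+u1))) = 0 <-> u0 = 0 \/ u1 = 0).
Proof.
  intros H0 H1 Hs.
  assert (B0 : 0 <= u0/(u0+u1) <= 1).
  { split; [apply Rdiv_le_0_compat; lra|]. apply frac_le; lra. }
  assert (B1 : 0 <= u1/(u0+u1) <= 1).
  { split; [apply Rdiv_le_0_compat; lra|]. rewrite Rplus_comm. apply frac_le; lra. }
  pose proof (plogp_le _ B0); pose proof (plogp_le _ B1).
  split; [lra|split].
  - intros E. destruct (Req_dec u0 0); [auto|]. destruct (Req_dec u1 0); [auto|].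
    exfalso.
    assert (Hq : 0 < u0/(u0+u1) < 1).
    { split; [apply Rdiv_lt_0_compat; lra|]. apply frac_lt; lra. }
    pose proof (plogp_neg _ Hq). lra.
  - intros [->| ->].
    + rewrite Rplus_0_l. unfold Rdiv. rewrite Rmult_0_l, Rinv_r by lra. rewrite plogp_0, plogp_1. ring.
    + rewrite Rplus_0_r. unfold Rdiv. rewrite Rmult_0_l, Rinv_r by lra. rewrite plogp_0, plogp_1. ring.
Qed.

Lemma HX_facts P t : (forall t x y, 0 <= P t x y) -> 0 < pT P t ->
  0 <= H_X_given_Tt P t /\ (H_X_given_Tt P t = 0 <-> pTX P t false = 0 \/ pTX P t true = 0).
Proof.
  intros Hn Hp. unfold H_X_given_Tt, ent2, sumb.
  change (pT P t) with (pTX P t false + pTX P t true) in *.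
  apply ent_facts; auto; unfold pTX, sumb; pose proof (Hn t false false);
  pose proof (Hn t false true); pose proof (Hn t true false); pose proof (Hn t true true); lra.
Qed.

Lemma HY_facts P t : (forall t x y, 0 <= P t x y) -> 0 < pT P t ->
  0 <= H_Y_given_Tt P t /\ (H_Y_given_Tt P t = 0 <-> pTY P t false = 0 \/ pTY P t true = 0).
Proof.
  intros Hn Hp. unfold H_Y_given_Tt, ent2, sumb.
  replace (pT P t) with (pTY P t false + pTY P t true) in *
    by (unfold pT, pTY, sumb; ring).
  apply ent_facts; auto; unfold pTY, sumb; pose proof (Hn t false false);
  pose proof (Hn t false true); pose proof (Hn t true false); pose proof (Hn t true true); lra.
Qed.

Definition swapT (Q : jdist) : jdist := fun t x y => Q (negb t) x y.

Lemma H_swap Q : H_T_given_XY (swapT Q) = H_T_given_XY Q.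
Proof.
  assert (E : pXY (swapT Q) = pXY Q).
  { apply functional_extensionality; intro x; apply functional_extensionality; intro y.
    unfold pXY, swapT, sumb; simpl; ring. }
  unfold H_T_given_XY. rewrite E. unfold swapT, sumb; simpl. ring.
Qed.

Lemma shift_swap Q s : shift (swapT Q) false false false s = swapT (shift Q true false false s).
Proof.
  apply functional_extensionality; intro t; apply functional_extensionality; intro x;
  apply functional_extensionality; intro y. unfold shift, swapT; destruct t; reflexivity.
Qed.

Lemma classify (Q : jdist) t : (forall x y, 0 <= Q t x y) ->
  (forall x y, Q t x y = 0 -> Q t x (negb y) = 0 \/ Q t (negb x) y = 0) ->
  (0 < Q t false false /\ 0 < Q t false true /\ 0 < Q t true false /\ 0 < Q t true true) \/
  ((Q t false false = 0 /\ Q t false true = 0) \/ (Q t true false = 0 /\ Q t true true = 0)) \/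
  ((Q t false false = 0 /\ Q t true false = 0) \/ (Q t false true = 0 /\ Q t true true = 0)).
Proof.
  intros Hn Hz.
  destruct (Req_dec (Q t false false) 0) as [Z|N1].
  { destruct (Hz _ _ Z) as [Z'|Z']; simpl in Z'; auto. }
  destruct (Req_dec (Q t false true) 0) as [Z|N2].
  { destruct (Hz _ _ Z) as [Z'|Z']; simpl in Z'; auto. }
  destruct (Req_dec (Q t true false) 0) as [Z|N3].
  { destruct (Hz _ _ Z) as [Z'|Z']; simpl in Z'; auto. }
  destruct (Req_dec (Q t true true) 0) as [Z|N4].
  { destruct (Hz _ _ Z) as [Z'|Z']; simpl in Z'; auto. }
  left. pose proof (Hn false false); pose proof (Hn false true);
  pose proof (Hn true false); pose proof (Hn true true). repeat split; lra.
Qed.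

Lemma CX_CI (Q : jdist) :
  Q false false false * Q true false true = Q false false true * Q true false false /\
  Q false true false * Q true true true = Q false true true * Q true true false ->
  CI_T_Y_given_X Q.
Proof.
  intros [E1 E2] t x y. unfold pX, pTX, pXY, sumb.
  destruct t, x, y; nra.
Qed.

Lemma CY_CI (Q : jdist) :
  Q false false false * Q true true false = Q false true false * Q true false false /\
  Q false false true * Q true true true = Q false true true * Q true false true ->
  CI_T_X_given_Y Q.
Proof.
  intros [E1 E2] t x y. unfold pY, pTY, pXY, sumb.
  destruct t, x, y; nra.
Qed.

Theorem mainTheorem16 (P Qt : jdist) :
  is_dist P ->
  0 < pT P false -> 0 < pT P true ->
  ( ((H_X_given_Tt P false = 0 /\ H_Y_given_Tt P true = 0) \/
     (H_X_given_Tt P true = 0 /\ H_Y_given_Tt P false = 0)) ->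
    (H_X_given_T P = 0 \/ H_Y_given_T P = 0) ) ->
  is_argmax_HTXY P Qt ->
  rel_interior (DeltaP P) Qt ->
  CI_T_X_given_Y Qt \/ CI_T_Y_given_X Qt.
Proof.
  intros HP Hp0 Hp1 Hyp [HD Hmax] Hri.
  assert (HnQ : forall t x y, 0 <= Qt t x y) by (destruct HD as [[Hn _] _]; exact Hn).
  assert (HnP : forall t x y, 0 <= P t x y) by (destruct HP as [Hn _]; exact Hn).
  assert (HpT : forall t, 0 < pT P t) by (intro t; destruct t; auto).
  assert (HZ := zero_pattern P Qt HD Hri).
  assert (K0 := classify Qt false (HnQ false) (HZ false)).
  assert (K1 := classify Qt true (HnQ true) (HZ true)).
  assert (Mx : forall t x, pTX Qt t x = pTX P t x) by (destruct HD as [_ [Hx _]]; exact Hx).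
  assert (My : forall t y, pTY Qt t y = pTY P t y) by (destruct HD as [_ [_ Hy]]; exact Hy).
  assert (RX : forall t, ((Qt t false false = 0 /\ Qt t false true = 0) \/
                          (Qt t true false = 0 /\ Qt t true true = 0)) <-> H_X_given_Tt P t = 0).
  { intro t. destruct (HX_facts P t HnP (HpT t)) as [_ Heq]. rewrite Heq, <- !Mx.
    unfold pTX, sumb. pose proof (HnQ t false false); pose proof (HnQ t false true);
    pose proof (HnQ t true false); pose proof (HnQ t true true).
    split; [intros [[? ?]|[? ?]]; [left|right]; lra|intros [?|?]; [left|right]; split; lra]. }
  assert (CY : forall t, ((Qt t false false = 0 /\ Qt t true false = 0) \/
                          (Qt t false true = 0 /\ Qt t true true = 0)) <-> H_Y_given_Tt P t = 0).
  { intro t. destruct (HY_facts P t HnP (HpT t)) as [_ Heq]. rewrite Heq, <- !My.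
    unfold pTY, sumb. pose proof (HnQ t false false); pose proof (HnQ t false true);
    pose proof (HnQ t true false); pose proof (HnQ t true true).
    split; [intros [[? ?]|[? ?]]; [left|right]; lra|intros [?|?]; [left|right]; split; lra]. }
  assert (HXT : H_X_given_T P = 0 -> H_X_given_Tt P false = 0 /\ H_X_given_Tt P true = 0).
  { unfold H_X_given_T, sumb. intro E.
    destruct (HX_facts P false HnP (HpT false)) as [N0 _].
    destruct (HX_facts P true HnP (HpT true)) as [N1 _].
    split; nra. }
  assert (HYT : H_Y_given_T P = 0 -> H_Y_given_Tt P false = 0 /\ H_Y_given_Tt P true = 0).
  { unfold H_Y_given_T, sumb. intro E.
    destruct (HY_facts P false HnP (HpT false)) as [N0 _].
    destruct (HY_facts P true HnP (HpT true)) as [N1 _].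
    split; nra. }
  assert (S0 : (0 < Qt false false false /\ 0 < Qt false false true /\
                0 < Qt false true false /\ 0 < Qt false true true) ->
               Qt false false false * Qt false true true *
                 ((Qt false false true + Qt true false true) * (Qt false true false + Qt true true false)) =
               Qt false false true * Qt false true false *
                 ((Qt false false false + Qt true false false) * (Qt false true true + Qt true true true))).
  { intros (?&?&?&?).
    assert (E := stat Qt).
    unfold pXY, sumb in E. apply E.
    - intros x y; destruct x, y; auto.
    - intros x y; auto.
    - intros s Hs. apply Hmax. apply shift_Delta; auto. }
  assert (S1 : (0 < Qt true false false /\ 0 < Qt true false true /\
                0 < Qt true true false /\ 0 < Qt true true true) ->
               Qt true false false * Qt true true true *
                 ((Qt true false true + Qt false false true) * (Qt true true false + Qt false true false)) =
               Qt true false true * Qt true true false *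
                 ((Qt true false false + Qt false false false) * (Qt true true true + Qt false true true))).
  { intros (?&?&?&?).
    assert (E := stat (swapT Qt)).
    unfold pXY, sumb, swapT in E; simpl in E. apply E.
    - intros x y; destruct x, y; auto.
    - intros x y; auto.
    - intros s Hs. change (fun t x y : bool => Qt (negb t) x y) with (swapT Qt). rewrite shift_swap, !H_swap. apply Hmax. apply shift_Delta; auto. }
  destruct (alg (Qt false false false) (Qt false false true) (Qt false true false) (Qt false true true)
                (Qt true false false) (Qt true false true) (Qt true true false) (Qt true true true))
    as [CXh|CYh]; auto.
  - intros Hc. rewrite (RX false), (RX true), (CY false), (CY true) in *.
    destruct (Hyp Hc) as [E|E]; [left; apply HXT; auto | right; apply HYT; auto].
  - right. apply CX_CI. exact CXh.
  - left. apply CY_CI. exact CYh.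
Qed.
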